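(* Let $(M_k)_{k\in\mathbb{N}}$ be the sequence of matrices of a directive sequence and let $v\in\mathbb{R}_+^{d+1}$ have a totally irrational direction and satisfy $\bigcap_{n\in\mathbb{N}}M_{[0,n)}\mathbb{R}_+^{d+1}=\mathbb{R}_+v$. Then for every $k\in\mathbb{N}$ there exists $n\ge k$ such that $M_{[k,n)}>0$ (all entries positive).
   Context: $S$ is a finite set of unimodular substitutions on $A=\{0,\dots,d\}$; for a directive sequence $s=(s_k)\in S^{\mathbb{N}}$, $M_k=\mathrm{ab}(s_k)$ is the (non-negative integer, invertible) abelianization matrix of $s_k$, and $M_{[k,n)}=M_k\cdots M_{n-1}$. A vector $v\in\mathbb{R}_+^{d+1}$ has a totally irrational direction if its coordinates are linearly independent over $\mathbb{Q}$. *)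

(* Defs.v *)
From HB Require Import structures.
From mathcomp Require Import all_boot all_order all_algebra.
From mathcomp Require Import reals.
Set Implicit Arguments. Unset Strict Implicit. Unset Printing Implicit Defensive.
Import Order.TTheory GRing.Theory Num.Theory.
Local Open Scope ring_scope.

Definition subst (d : nat) := {ffun 'I_d.+1 -> seq 'I_d.+1}.

Definition ab (d : nat) (sigma : subst d) : 'M[int]_d.+1 :=
  \matrix_(i, j) ((count_mem i (sigma j))%:Z).

Definition unimodular (d : nat) (sigma : subst d) : Prop :=
  \det (ab sigma) = 1 \/ \det (ab sigma) = -1.

(* M_[k,n) = M_k * ... * M_{n-1} (identity if n <= k) *)
Definition Mprod (d : nat) (s : nat -> subst d) (k n : nat) : 'M[int]_d.+1 :=
  \prod_(k <= i < n) ab (s i).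

Definition nonneg_vec (R : realType) (n : nat) (x : 'cV[R]_n) : Prop :=
  forall i, 0 <= x i 0.

Definition in_cone (R : realType) (n : nat) (A : 'M[R]_n) (y : 'cV[R]_n) : Prop :=
  exists x : 'cV[R]_n, nonneg_vec x /\ y = A *m x.

Definition totally_irrational (R : realType) (n : nat) (v : 'cV[R]_n) : Prop :=
  forall q : 'I_n -> rat, \sum_i ratr (q i) * v i 0 = 0 -> forall i, q i = 0.

Definition positive_mx (n : nat) (A : 'M[int]_n) : Prop :=
  forall i j, 0 < A i j.

(* Main.v *)
Require Import Defs.
From HB Require Import structures.
From mathcomp Require Import all_boot all_order all_algebra.
From mathcomp Require Import reals.
From mathcomp Require Import all_classical all_reals all_analysis.
Import Order.TTheory GRing.Theory Num.Theory.
Import numFieldNormedType.Exports.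
Local Open Scope ring_scope.
Local Open Scope classical_set_scope.
Lemma lin_closed (R : realType) n (c : 'I_n -> R) (P : set R) :
  closed P -> closed [set y : 'rV[R]_n | P (\sum_l c l * y ord0 l)].
Proof.
move=> cP.
apply: (@preimage_closed _ _ (fun y : 'rV[R]_n => \sum_l c l * y ord0 l)) => //.
move=> y _.
apply: (@continuous_big _ _ +%R 0 predT _ _ _ (fun l (y : 'rV[R]_n) => c l * y ord0 l)).
  exact: add_continuous.
move=> l _ z. apply: continuousM; first exact: cst_continuous.
exact: coord_continuous.
Qed.

Lemma nested_compact (R : realType) n (F : nat -> set 'rV[R]_n) k :
  (forall m, closed (F m)) -> (forall m, (k <= m)%N -> F m !=set0) ->
  (forall a b, (k <= a)%N -> (a <= b)%N -> F b `<=` F a) ->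
  (forall m y, F m y -> forall j, 0 <= y ord0 j <= 1) ->
  exists y, forall m, (k <= m)%N -> F m y.
Proof.
move=> Fcl Fne Fnest Fb.
pose A := [set v : 'rV[R]_n | forall i, `[(0:R), 1]%classic (v ord0 i)].
have Aco : compact A.
  apply: (@rV_compact _ _ (fun=> `[(0:R), 1]%classic)) => _.
  exact: segment_compact.
move: Aco; rewrite compact_In0 => /(_ nat [set m | (k <= m)%N] (fun m => A `&` F m)).
case.
- by exists F => // i _; rewrite setIC.
- move=> D' sD'.
  pose m := maxn k (\max_(i <- finmap.enum_fset D') i).
  have [y Fy] := Fne m (leq_maxl _ _).
  exists y => i /= iD'; split.
    by move=> j; rewrite /= in_itv /=; apply: Fb Fy j.
  have ki : (k <= i)%N by have := sD' i iD'; rewrite inE.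
  apply: (Fnest i m ki _ y Fy).
  apply: leq_trans (leq_maxr _ _).
  by apply: leq_bigmax_seq.
move=> y Hy; exists y => m km.
by have [] := Hy m km.
Qed.

Lemma Mprod_split d (s : nat -> subst d) a b c : (a <= b)%N -> (b <= c)%N ->
  Mprod s a c = Mprod s a b *m Mprod s b c.
Proof. by move=> ab bc; rewrite /Mprod (big_cat_nat ab bc) mulmxE. Qed.

Lemma Mprod_ge0 d (s : nat -> subst d) a b i j : 0 <= Mprod s a b i j.
Proof.
rewrite /Mprod; move: i j; apply: (big_ind (fun M : 'M[int]_d.+1 => forall i j, 0 <= M i j)).
- by move=> i j; rewrite mxE; case: (i == j).
- move=> A B HA HB i j; rewrite -mulmxE mxE; apply: sumr_ge0 => l _.
  by apply: mulr_ge0.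
- by move=> l _ i j; rewrite mxE.
Qed.

Lemma Mprod_det d (S : seq (subst d)) (HS : forall sigma, sigma \in S -> unimodular sigma)
  (s : nat -> subst d) (Hs : forall k, s k \in S) a b :
  \det (Mprod s a b) = 1 \/ \det (Mprod s a b) = -1.
Proof.
rewrite /Mprod; apply: (big_ind (fun M : 'M[int]_d.+1 => \det M = 1 \/ \det M = -1)).
- by left; rewrite det1.
- move=> A B HA HB; rewrite -mulmxE det_mulmx.
  by case: HA => ->; case: HB => ->; rewrite ?mulr1 ?mulrN1 ?opprK; auto.
- by move=> l _; apply: HS.
Qed.

Lemma Nunit (R : realType) d (S : seq (subst d)) (HS : forall sigma, sigma \in S -> unimodular sigma)
  (s : nat -> subst d) (Hs : forall k, s k \in S) a b :
  map_mx (intr : int -> R) (Mprod s a b) \in unitmx.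
Proof.
rewrite unitmxE det_map_mx unitfE.
by case: (Mprod_det _ _ HS _ Hs a b) => ->; rewrite ?rmorphN rmorph1 ?oppr_eq0 oner_eq0.
Qed.

Lemma NM (R : realType) d (s : nat -> subst d) a b c : (a <= b)%N -> (b <= c)%N ->
  map_mx (intr : int -> R) (Mprod s a c) = map_mx intr (Mprod s a b) *m map_mx intr (Mprod s b c).
Proof. by move=> ab bc; rewrite (Mprod_split _ _ _ _ _ ab bc) map_mxM. Qed.

Lemma nonneg_mul (R : realType) d (s : nat -> subst d) a b (x : 'cV[R]_d.+1) :
  nonneg_vec x -> nonneg_vec (map_mx intr (Mprod s a b) *m x).
Proof.
move=> hx i; rewrite mxE; apply: sumr_ge0 => l _; apply: mulr_ge0 => //.
by rewrite mxE ler0z Mprod_ge0.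
Qed.

Lemma adj_int (R : realType) d (M : 'M[int]_d.+1) :
  \adj (map_mx (intr : int -> R) M) = map_mx intr (\adj M).
Proof. by rewrite map_mx_adj. Qed.

Lemma coord_closed (R : realType) n j (P : set R) :
  closed P -> closed [set y : 'rV[R]_n | P (y ord0 j)].
Proof.
move=> cP; apply: (@preimage_closed _ _ (fun y : 'rV[R]_n => y ord0 j)) => // y _.
exact: coord_continuous.
Qed.

Lemma sum_rowE (R : realType) n (A : 'M[R]_n) (y : 'rV[R]_n) j :
  \sum_l A j l * y ord0 l = (A *m y^T) j ord0.
Proof. by rewrite mxE; apply: eq_bigr => l _; rewrite mxE. Qed.
Local Close Scope classical_set_scope.

Theorem lemma3p30 (R : realType) (d : nat) (S : seq (subst d))
  (HS : forall sigma, sigma \in S -> unimodular sigma)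
  (s : nat -> subst d) (Hs : forall k, s k \in S)
  (v : 'cV[R]_d.+1) (Hv0 : nonneg_vec v) (Hirr : totally_irrational v)
  (Hcone : forall y : 'cV[R]_d.+1,
     (forall n, in_cone (map_mx intr (Mprod s 0 n)) y) <->
     (exists t : R, 0 <= t /\ y = t *: v)) :
  forall k : nat, exists n : nat, (k <= n)%N /\ positive_mx (Mprod s k n).
Proof.
move=> k.
have [//|Hno] := pselect (exists n : nat, (k <= n)%N /\ positive_mx (Mprod s k n)).
exfalso.
pose N a b := map_mx (intr : int -> R) (Mprod s a b).
have NU a b : N a b \in unitmx := Nunit _ _ _ HS _ Hs a b.
have H1 n : (k <= n)%N -> exists i j, Mprod s k n i j = 0.
  move=> kn; apply: contrapT => H; apply: Hno; exists n; split => // i j.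
  rewrite lt_neqAle Mprod_ge0 andbT eq_sym; apply/eqP => e; apply: H; by exists i, j.
have [i Hi] : exists i, forall n, (k <= n)%N ->
    exists m j, (n <= m)%N /\ Mprod s k m i j = 0.
  apply: contrapT => H.
  have H' : forall i : 'I_d.+1, exists n : nat,
      forall m j, (n <= m)%N -> Mprod s k m i j != 0.
    move=> i; apply: contrapT => Hn; apply: H; exists i => n kn.
    apply: contrapT => Hm; apply: Hn; exists n => m j nm; apply/eqP => e.
    by apply: Hm; exists m, j.
  have [nf Hnf] := fin_all_exists H'.
  pose M := maxn k (\max_i nf i).
  have [i [j e]] := H1 M (leq_maxl _ _).
  suff : (nf i <= M)%N by move/(Hnf i M j); rewrite e eqxx.
  by apply: leq_trans (leq_maxr _ _); exact: leq_bigmax.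
pose F n := [set y : 'rV[R]_d.+1 | (forall j, 0 <= y ord0 j) /\
   \sum_l y ord0 l = 1 /\ y ord0 i = 0 /\
   forall j, 0 <= \sum_l invmx (N k n) j l * y ord0 l]%classic.
have Fcl n : closed (F n).
  have -> : F n = ((\bigcap_(j in setT) [set y : 'rV[R]_d.+1 | [set x : R | 0 <= x] (y ord0 j)])
    `&` ([set y | [set x : R | x = 1] (\sum_l (fun=> 1) l * y ord0 l)] `&`
    ([set y | [set x : R | x = 0] (y ord0 i)] `&`
    \bigcap_(j in setT) [set y | [set x : R | 0 <= x] (\sum_l invmx (N k n) j l * y ord0 l)])))%classic.
    apply/seteqP; split => y /=.
    - move=> [h1 [h2 [h3 h4]]]; split; first by move=> j _; apply: h1.
      split; first by under eq_bigr do rewrite mul1r.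
      by split => // j _; apply: h4.
    - move=> [h1 [h2 [h3 h4]]]; split; first by move=> j; apply: h1.
      split; first by move: h2; under eq_bigr do rewrite mul1r.
      by split => // j; apply: h4.
  apply: closedI; first by apply: closed_bigI => j _; apply: coord_closed; apply: closed_ge.
  apply: closedI; first by apply: lin_closed; apply: closed_eq.
  apply: closedI; first by apply: coord_closed; apply: closed_eq.
  by apply: closed_bigI => j _; apply: lin_closed; apply: closed_ge.
have Fnest a b : (k <= a)%N -> (a <= b)%N -> (F b `<=` F a)%classic.
  move=> ka ab y [h1 [h2 [h3 h4]]]; split=> //; split=> //; split=> // j.
  have e : N k b = N k a *m N a b := NM _ _ s k a b ka ab.
  rewrite sum_rowE.
  have hw : nonneg_vec (invmx (N k b) *m y^T).
    by move=> j'; rewrite -sum_rowE.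
  have yE : y^T = N k a *m (N a b *m (invmx (N k b) *m y^T)).
    by rewrite mulmxA -e mulKVmx.
  rewrite yE mulKmx //.
  exact: (nonneg_mul _ _ s a b _ hw).
have Fb m y : F m y -> forall j, 0 <= y ord0 j <= 1.
  move=> [h1 [h2 _]] j; rewrite h1 /= -h2 (bigD1 j) //= lerDl.
  by apply: sumr_ge0 => l _; apply: h1.
have Fne n : (k <= n)%N -> (F n !=set0)%classic.
  move=> kn; have [m [j [nm e]]] := Hi n kn.
  pose c := \sum_l N k m l j.
  have c_ge0 : forall l, 0 <= N k m l j by move=> l; rewrite mxE ler0z Mprod_ge0.
  have cpos : 0 < c.
    rewrite lt_neqAle sumr_ge0 ?andbT // eq_sym; apply/negP => /eqP c0.
    have h : forall l, N k m l j = 0.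
      by move=> l; apply: (psumr_eq0P (fun l _ => c_ge0 l) c0).
    have : N k m *m delta_mx j (0 : 'I_1) = 0 by rewrite -colE; apply/matrixP => l z; rewrite [LHS]mxE [RHS]mxE; exact: h.
    move/(congr1 (mulmx (invmx (N k m)))); rewrite mulKmx // mulmx0 => /matrixP /(_ j ord0).
    by rewrite !mxE !eqxx /= => /eqP; rewrite oner_eq0.
  exists (c^-1 *: col j (N k m))^T; split.
    by move=> l; rewrite !mxE; apply: mulr_ge0; [rewrite invr_ge0 ltW | rewrite ler0z Mprod_ge0].
  split.
    rewrite (eq_bigr (fun l => c^-1 * N k m l j)); last by move=> l _; rewrite !mxE.
    by rewrite -mulr_sumr mulVf // gt_eqF.
  split; first by rewrite !mxE e mulr0z mulr0.
  have e2 : N k m = N k n *m N n m := NM _ _ s k n m kn nm.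
  move=> j'; rewrite sum_rowE trmxK colE scalemxAr e2 -mulmxA mulKmx //.
  apply: nonneg_mul => l; rewrite !mxE; apply: mulr_ge0; first by rewrite invr_ge0 ltW.
  by rewrite ler0n.
have [y Hy] := nested_compact _ _ F k Fcl Fne Fnest Fb.
have Hk := Hy k (leqnn k).
pose x0 := y^T.
have x0nn : nonneg_vec x0 by case: Hk => h1 _ j; rewrite mxE; apply: h1.
pose z := N 0%N k *m x0.
have zc : forall n, in_cone (map_mx intr (Mprod s 0 n)) z.
  move=> n; case: (leqP k n) => kn.
  - exists (invmx (N k n) *m x0); split.
      by move=> j; rewrite -sum_rowE; case: (Hy n kn) => _ [_ [_ h]]; apply: h.
    have e : N 0%N n = N 0%N k *m N k n := NM _ _ s 0 k n (leq0n k) kn.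
    by rewrite -/(N 0%N n) e -mulmxA mulKVmx.
  - exists (N n k *m x0); split; first exact: nonneg_mul.
    have e : N 0%N k = N 0%N n *m N n k := NM _ _ s 0 n k (leq0n n) (ltnW kn).
    by rewrite /z e mulmxA.
have [t [t0 zE]] := (Hcone z).1 zc.
have [x [xnn vE]] : in_cone (map_mx intr (Mprod s 0 k)) v.
  by apply: (Hcone v).2; exists 1; split; [exact: ler01 | rewrite scale1r].
have x0E : x0 = t *: x.
  apply: (can_inj (mulKmx (NU 0%N k))).
  by rewrite -scalemxAr -vE -zE.
have tne0 : t != 0.
  apply/eqP => t0'; case: Hk => _ [h2 _].
  have : \sum_l y ord0 l = 0.
    apply: big1 => l _.
    by have := congr1 (fun M : 'cV[R]_d.+1 => M l ord0) x0E; rewrite !mxE t0' mul0r.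
  by rewrite h2 => /eqP; rewrite oner_eq0.
have xi0 : x i ord0 = 0.
  have := congr1 (fun M : 'cV[R]_d.+1 => M i ord0) x0E; rewrite !mxE.
  case: Hk => _ [_ [-> _]] /esym /eqP; rewrite mulf_eq0 (negbTE tne0) /=.
  by move/eqP.
pose M := Mprod s 0 k.
have key : \sum_l ((\adj M) i l)%:~R * v l 0 = 0 :> R.
  have : (\adj (N 0%N k) *m v) i ord0 = 0.
    by rewrite vE mulmxA mul_adj_mx mul_scalar_mx mxE xi0 mulr0.
  rewrite adj_int mxE => h; rewrite -[X in _ = X]h; apply: eq_bigr => l _; by rewrite [in RHS]mxE.
pose q l := ((\adj M) i l)%:~R : rat.
have hq := Hirr q.
have qz : forall l, (\adj M) i l = 0.
  move=> l; apply/eqP; rewrite -(intr_eq0 rat) -/(q l) hq //.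
  by rewrite -[RHS]key; apply: eq_bigr => l' _; rewrite ratr_int.
have := congr1 (fun A : 'M[int]_d.+1 => A i i) (mul_adj_mx M).
rewrite !mxE big1; last by move=> l _; rewrite qz mul0r.
rewrite eqxx mulr1n.
case: (Mprod_det _ _ HS _ Hs 0%N k) => ->; last (rewrite -oppr0 => /oppr_inj).
all: by move/eqP; rewrite eq_sym oner_eq0.
Qed.
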